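(* Let $A\ge1$, $K\ge1$, let $N$ be a positive integer and $C=N+1$, and let $\eta>0$ satisfy $\eta\le\frac{1}{270C}$. Consider optimistic online mirror descent with the log-barrier regularizer on $\Delta_A$: $\pi_1'=\pi_1=\frac1A\mathbf{1}$, and for $k=1,\dots,K$, a vector $\hat\beta_k\in\mathbb{R}_+^A$ is received satisfying $\sum_a\pi_k(a)\hat\beta_k(a)\le C$, and then $$\pi_{k+1}'=\arg\max_{\pi\in\Delta_A}\left\{\langle\pi,\hat\beta_k\rangle-D_\psi(\pi,\pi_k')\right\},\qquad \pi_{k+1}=\arg\max_{\pi\in\Delta_A}\left\{\langle\pi,\hat\beta_k\rangle-D_\psi(\pi,\pi_{k+1}')\right\}.$$ Then for every $k$ and every action $a$, $$|\pi_{k+1}(a)-\pi_k(a)|\le 120\,\eta\,C\,\pi_k(a).$$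
   Context: $\Delta_A$ is the probability simplex over $A$ actions. The regularizer is $\psi(x)=\frac1\eta\sum_{a=1}^A\log\frac{1}{x(a)}$ for $x\in\mathbb{R}_{+}^A$ (positive coordinates), and $D_\psi(x,x')=\psi(x)-\psi(x')-\langle\nabla\psi(x'),x-x'\rangle$ is its Bregman divergence. The vectors $\hat\beta_k$ may be chosen arbitrarily (adaptively) subject to the stated constraint. *)

(* Defs.v *)
From mathcomp Require Import all_boot all_order all_algebra.
From mathcomp Require Import reals exp.
Set Implicit Arguments. Unset Strict Implicit. Unset Printing Implicit Defensive.
Import Order.TTheory GRing.Theory Num.Theory.
Local Open Scope ring_scope.

Section LogBarrier.
Variables (R : realType) (A : nat).

Definition posvec (x : 'I_A -> R) : Prop := forall a, 0 < x a.

Definition in_simplex (x : 'I_A -> R) : Prop :=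
  (forall a, 0 <= x a) /\ \sum_(a < A) x a = 1.

Definition inner (x y : 'I_A -> R) : R := \sum_(a < A) x a * y a.

Definition psi (eta : R) (x : 'I_A -> R) : R :=
  eta^-1 * \sum_(a < A) ln (1 / x a).

Definition grad_psi (eta : R) (x : 'I_A -> R) : 'I_A -> R :=
  fun a => - (eta * x a)^-1.

Definition bregman (eta : R) (x x' : 'I_A -> R) : R :=
  psi eta x - psi eta x' - inner (grad_psi eta x') (fun a => x a - x' a).

(* Points of the
   simplex with a zero coordinate are outside the domain of psi (objective
   -oo), so the maximization is over simplex points with positive coordinates. *)
Definition is_omd_argmax (eta : R) (beta q p : 'I_A -> R) : Prop :=
  in_simplex p /\ posvec p /\
  forall x, in_simplex x -> posvec x ->
    inner x beta - bregman eta x q <= inner p beta - bregman eta p q.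

End LogBarrier.

(* Main.v *)
Require Import Defs.
From mathcomp Require Import all_boot all_order all_algebra.
From mathcomp Require Import reals exp.
From mathcomp Require Import ring lra.
Import Order.TTheory GRing.Theory Num.Theory.
Set Implicit Arguments. Unset Strict Implicit. Unset Printing Implicit Defensive.
Local Open Scope ring_scope.

Section H.
Variables (R : realType) (A : nat).

Lemma ln_diff (x y : R) : 0 < x -> 0 < y -> (y - x) / y <= ln y - ln x.
Proof.
move=> x0 y0.
have h := @le_ln1Dx R (x / y - 1).
have : -1 < x / y - 1 by have := divr_gt0 x0 y0; lra.
move/h; rewrite addrC subrK ln_div ?posrE // => H.
have -> : (y - x) / y = 1 - x / y by rewrite mulrBl divff ?gt_eqF.
lra.
Qed.

Lemma sum_two (d : 'I_A -> R) a b : a != b ->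
  (forall c, c != a -> c != b -> d c = 0) -> \sum_c d c = d a + d b.
Proof.
move=> ab H; rewrite (bigD1 a) //= (bigD1 b) /=; last by rewrite eq_sym ab.
rewrite big1 ?addr0 // => c /andP[ca cb]; exact: H.
Qed.

Definition phi (eta : R) (beta q : 'I_A -> R) c (y : R) :=
  y * beta c - eta^-1 * ln (1 / y) - (eta * q c)^-1 * (y - q c).

Lemma obj_sum eta beta (q x : 'I_A -> R) :
  inner x beta - bregman eta x q = \sum_c phi eta beta q c (x c) + psi eta q.
Proof.
rewrite /bregman /psi /inner /grad_psi /phi /=.
set S1 := \sum_(a < A) ln (1 / q a).
have -> : \sum_(c < A)
     (x c * beta c - eta^-1 * ln (1 / x c) - (eta * q c)^-1 * (x c - q c)) =
  \sum_(c < A) x c * beta c - eta^-1 * \sum_(c < A) ln (1 / x c) +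
  \sum_(a < A) - (eta * q a)^-1 * (x a - q a).
  rewrite mulr_sumr -sumrB -big_split; apply: eq_bigr => c _ /=; by rewrite mulNr.
ring.
Qed.

Lemma inv_L1 (u t : R) : 0 < u -> 0 <= t -> u^-1 - (u + t)^-1 <= t * (u * u)^-1.
Proof.
move=> u0 t0.
have ut : 0 < u + t by lra.
rewrite invfM.
have w1 : u^-1 * u = 1 by rewrite mulVf ?gt_eqF.
have v1 : (u+t)^-1 * (u+t) = 1 by rewrite mulVf ?gt_eqF.
have w0 : 0 < u^-1 by rewrite invr_gt0.
have v0 : 0 < (u+t)^-1 by rewrite invr_gt0.
have vw : (u+t)^-1 <= u^-1 by rewrite lef_pV2 ?posrE; lra.
have -> : u^-1 - (u+t)^-1 = t * (u^-1 * (u+t)^-1).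
  by field; apply/andP; split; rewrite gt_eqF.
apply: ler_wpM2l => //; apply: ler_wpM2l => //; exact: ltW.
Qed.

Lemma inv_L2 (u t : R) : 0 < u -> 0 <= t -> t <= u / 2 -> (u - t)^-1 - u^-1 <= 2 * t * (u * u)^-1.
Proof.
move=> u0 t0 tu.
have ut : 0 < u - t by lra.
rewrite invfM.
have w1 : u^-1 * u = 1 by rewrite mulVf ?gt_eqF.
have v1 : (u-t)^-1 * (u-t) = 1 by rewrite mulVf ?gt_eqF.
have w0 : 0 < u^-1 by rewrite invr_gt0.
have v0 : 0 < (u-t)^-1 by rewrite invr_gt0.
have vw : (u-t)^-1 <= 2 * u^-1.
  rewrite -[2]invrK -invfM lef_pV2 ?posrE ?mulr_gt0 ?invr_gt0 //; last lra.
have -> : (u-t)^-1 - u^-1 = t * ((u-t)^-1 * u^-1).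
  by field; apply/andP; split; rewrite gt_eqF.
rewrite (mulrC 2 t) -mulrA; apply: ler_wpM2l => //.
rewrite mulrA; apply: ler_wpM2r; [exact: ltW | done].
Qed.

Lemma term_le_sum (F : 'I_A -> R) c : (forall i, 0 <= F i) -> F c <= \sum_i F i.
Proof.
move=> F0; rewrite (bigD1 c) //= lerDl; exact: sumr_ge0.
Qed.

Lemma exists_max (q : 'I_A -> R) (c0 : 'I_A) : exists a, forall c, q c <= q a.
Proof.
case: (@arg_maxP _ _ 'I_A c0 xpredT q isT) => i _ H.
by exists i => c; apply: H.
Qed.

Lemma foc eta beta (q p : 'I_A -> R) : 0 < eta -> posvec q ->
  is_omd_argmax eta beta q p -> forall a b,
  eta * beta a - (q a)^-1 + (p a)^-1 <= eta * beta b - (q b)^-1 + (p b)^-1.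
Proof.
move=> eta0 q0 [[p0' psum] [p0 Hopt]] a b.
have [->|ab] := eqVneq a b; first by [].
rewrite -subr_ge0 -opprB oppr_ge0.
apply/ler_addgt0Pr => e e0; rewrite add0r.
set Kc := (p a * p a)^-1 + 2 * (p b * p b)^-1.
have pa := p0 a; have pb := p0 b.
have Kc0 : 0 < Kc.
  have h1 : 0 < (p a * p a)^-1 by rewrite invr_gt0 mulr_gt0.
  have h2 : 0 < (p b * p b)^-1 by rewrite invr_gt0 mulr_gt0.
  rewrite /Kc; lra.
set t := Num.min (p b / 2) (e / Kc).
have t0 : 0 < t by rewrite lt_min !divr_gt0.
have tb : t <= p b / 2 by rewrite ge_min lexx.
have tK : t * Kc <= e.
  have : t <= e / Kc by rewrite ge_min lexx orbT.
  by rewrite ler_pdivlMr.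
set x := fun c => p c + (if c == a then t else 0) - (if c == b then t else 0).
have xa : x a = p a + t by rewrite /x eqxx (negbTE ab) subr0.
have xb : x b = p b - t by rewrite /x eqxx eq_sym (negbTE ab) addr0.
have xo : forall c, c != a -> c != b -> x c = p c.
  by move=> c ca cb; rewrite /x (negbTE ca) (negbTE cb) addr0 subr0.
have xpos : posvec x.
  move=> c; have [->|ca] := eqVneq c a; first by rewrite xa; lra.
  have [->|cb] := eqVneq c b; first by rewrite xb; lra.
  by rewrite xo.
have xsim : in_simplex x.
  split; first by move=> c; exact: ltW.
  have -> : \sum_(c < A) x c = \sum_(c < A) p c + \sum_(c < A) (x c - p c).
    by rewrite -big_split; apply: eq_bigr => c _ /=; ring.
  rewrite psum (@sum_two (fun c => x c - p c) a b ab); last first.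
    by move=> c ca cb; rewrite xo // subrr.
  by rewrite xa xb; ring.
have := Hopt x xsim xpos.
rewrite !obj_sum lerD2r -subr_ge0 -sumrB.
rewrite (@sum_two (fun c => phi eta beta q c (p c) - phi eta beta q c (x c)) a b ab);
  last by move=> c ca cb; rewrite xo // subrr.
rewrite xa xb /phi !div1r !lnV ?posrE //; last by lra.
set La := ln (p a + t) - ln (p a).
set Lb := ln (p b - t) - ln (p b).
have hLa : t / (p a + t) <= La.
  by have := @ln_diff (p a) (p a + t) pa ltac:(lra); rewrite addrAC subrr add0r.
have hLb : - (t / (p b - t)) <= Lb.
  have := @ln_diff (p b) (p b - t) pb ltac:(lra).
  by rewrite addrAC subrr add0r mulNr.
move=> H.
have L1 := @inv_L1 (p a) t pa (ltW t0).
have L2 := @inv_L2 (p b) t pb (ltW t0) tb.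
set T := - (eta * t * beta a) - La + t / q a + eta * t * beta b - Lb - t / q b.
have qa := q0 a; have qb := q0 b.
match type of H with is_true (Order.le _ ?X) => have E : X = eta^-1 * T end.
  rewrite /T /La /Lb; field.
  by rewrite !gt_eqF.
rewrite E pmulr_rge0 ?invr_gt0 // in H.
set G := eta * beta a - (q a)^-1 + (p a + t)^-1 - eta * beta b + (q b)^-1 - (p b - t)^-1.
have HG : t * G <= 0.
  have -> : t * G = eta * t * beta a - t / q a + t / (p a + t) - eta * t * beta b + t / q b - t / (p b - t).
    by rewrite /G; ring.
  rewrite /T in H; lra.
rewrite pmulr_rle0 // in HG.
rewrite /Kc in tK; move: tK.
have -> : t * ((p a * p a)^-1 + 2 / (p b * p b)) = t / (p a * p a) + 2 * t / (p b * p b) by ring.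
move=> tK; rewrite /G in HG; lra.
lra.
Qed.

Lemma step (eta : R) (beta q p : 'I_A -> R) M : (0 < A)%N -> 0 < eta ->
  posvec q -> in_simplex q -> (forall c, 0 <= beta c) ->
  inner q beta <= M -> eta * M <= 1 / 10 -> is_omd_argmax eta beta q p ->
  forall c, (1 - 4 * (eta * M)) * q c <= p c /\ p c <= (1 + 2 * (eta * M)) * q c.
Proof.
move=> A0 eta0 q0 [_ qsum] b0 qM dM Hp.
have Hf := foc eta0 q0 Hp.
case: Hp => [[_ psum] [p0 _]].
set c0 : 'I_A := Ordinal A0.
set mu := eta * beta c0 - (q c0)^-1 + (p c0)^-1.
have hmu : forall c, eta * beta c - (q c)^-1 + (p c)^-1 = mu.
  by move=> c; apply/eqP; rewrite eq_le !Hf.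
set d := eta * M.
have dM' : d <= 1 / 10 := dM.
set x := fun c => eta * q c * beta c.
have x0 : forall c, 0 <= x c.
  by move=> c; rewrite /x mulr_ge0 // mulr_ge0 // ltW.
have sx : \sum_c x c <= d.
  rewrite /x /d; under eq_bigr do rewrite -mulrA; rewrite -mulr_sumr.
  by apply: ler_wpM2l; [exact: ltW | exact: qM].
have xd : forall c, x c <= d by move=> c; apply: le_trans sx; exact: term_le_sum.
have d0 : 0 <= d by apply: le_trans sx; exact: sumr_ge0.
have E : forall c, p c * (1 - x c + mu * q c) = q c.
  move=> c; rewrite -(hmu c) /x; field.
  by rewrite !gt_eqF.
have mu0 : 0 <= mu.
  rewrite leNgt; apply/negP => mun.
  have lt : forall c, q c < p c.
    move=> c; have := E c; have := p0 c; have := q0 c; have := x0 c.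
    have : mu * q c < 0 by rewrite pmulr_llt0.
    nra.
  have : 0 < \sum_c (p c - q c).
    rewrite (bigD1 c0) //=; apply: ltr_pwDl; first by rewrite subr_gt0.
    by apply: sumr_ge0 => i _; rewrite subr_ge0 ltW.
  by rewrite sumrB psum qsum subrr ltxx.
have up : forall c, p c <= (1 + 2 * d) * q c.
  move=> c; have := E c; have := p0 c; have := q0 c; have := x0 c; have := xd c.
  move=> xdc x0c q0c p0c Ec.
  have : 0 <= p c * (mu * q c) by rewrite mulr_ge0 ?mulr_ge0 // ltW.
  move=> hp.
  have h1 : p c * (1 - x c) <= q c by lra.
  have h2 : p c * (1 - d) <= q c.
    have : 0 <= p c * (d - x c) by rewrite mulr_ge0 ?subr_ge0 // ltW.
    lra.
  have h3 : (1 + 2 * d) * (p c * (1 - d)) <= (1 + 2 * d) * q c.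
    by rewrite ler_wpM2l //; lra.
  have d2 : 0 <= 1 - 2 * d by lra.
  have : 0 <= p c * (d * (1 - 2 * d)) by apply: mulr_ge0; [exact: ltW | exact: mulr_ge0].
  lra.
have [s Hs] := exists_max q c0.
have up2 : forall c, p c <= q c + 2 * q s * x c.
  move=> c; have Ec := E c; have := p0 c; have := q0 c; have := x0 c; have := xd c.
  move=> xdc x0c q0c p0c.
  have hp : 0 <= p c * (mu * q c) by rewrite mulr_ge0 ?mulr_ge0 // ltW.
  have h1 : p c * (1 - x c) <= q c by lra.
  have hA : p c * x c <= (1 + 2 * d) * q c * x c by apply: ler_wpM2r => //; exact: up.
  have hB : (1 + 2 * d) * q c * x c <= (1 + 2 * d) * q s * x c.
    by apply: ler_wpM2r => //; apply: ler_wpM2l => //; lra.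
  have qs0 : 0 <= q s * x c by rewrite mulr_ge0 // ltW.
  have hC : (1 + 2 * d) * (q s * x c) <= 2 * (q s * x c) by apply: ler_wpM2r => //; lra.
  rewrite mulrA in hC; lra.
have ps : q s * (1 - 2 * d) <= p s.
  have : \sum_c p c <= p s + (\sum_c (q c + 2 * q s * x c) - (q s + 2 * q s * x s)).
    rewrite (bigD1 s) //= [X in _ <= _ + (X - _)](bigD1 s) //= addrAC subrr add0r.
    rewrite lerD2l; apply: ler_sum => i _; exact: up2.
  rewrite big_split /= -mulr_sumr psum qsum.
  have : 0 <= q s * x s by rewrite mulr_ge0 // ltW.
  have : q s * \sum_c x c <= q s * d by rewrite ler_wpM2l // ltW.
  move=> *; nra.
have mus : mu * q s <= 4 * d.
  have Es := E s; have := p0 s; have := q0 s; have := x0 s; have := xd s.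
  have h1 : p s * ((1 - x s + mu * q s) * (1 - 2 * d)) <= p s * 1.
    have -> : p s * ((1 - x s + mu * q s) * (1 - 2 * d)) = q s * (1 - 2 * d).
      by rewrite mulrA Es.
    by rewrite mulr1.
  rewrite ler_pM2l // in h1.
  move=> *; nra.
move=> c; split; last exact: up c.
have muc : mu * q c <= 4 * d.
  by apply: le_trans mus; rewrite ler_wpM2l.
have := E c; have := p0 c; have := q0 c; have := x0 c.
have : 0 <= p c * (4 * d - mu * q c) by rewrite mulr_ge0 ?subr_ge0 // ltW.
move=> *; nra.
Qed.

Lemma numfacts (e d1 d2 : R) : 0 < e -> e <= 1 / 270 ->
  d1 = e * (1 + 10 * e) -> d2 = (1 + 2 * d1) * d1 ->
  [/\ 0 <= d1, d1 <= 1/10, 0 <= d2, d2 <= 1/10 &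
   [/\ (1 + 2 * d2) * (1 + 2 * d1) * (1 + 10 * e) <= 1 + 20 * e,
       (1 - 20 * e) * (1 + 10 * e) <= (1 - 4 * d2) * (1 - 4 * d1),
       1 <= (1 + 10 * e) * (1 - 4 * d2),
       1 + 2 * d2 <= 1 + 10 * e &
       [/\ 0 <= 1 - 4 * d1, 0 <= 1 - 4 * d2, 0 <= 1 - 20 * e & 0 <= 1 + 2 * d1]]].
Proof.
move=> e0 e1 hd1 hd2.
have ee0 : 0 <= e * e by nra.
have ee : e * e <= 1/270 * e by apply: ler_wpM2r => //; exact: ltW.
have eee0 : 0 <= e * (e * e) by rewrite !mulr_ge0 // ltW.
have eee : e * (e * e) <= 1/270 * (e * e) by apply: ler_wpM2r.
have d10 : 0 <= d1 by rewrite hd1; lra.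
have d11 : d1 <= 11/10 * e by rewrite hd1; lra.
have dd : d1 * d1 <= (11/10 * e) * (11/10 * e) by apply: ler_pM.
have d20 : 0 <= d2 by rewrite hd2; nra.
have d21 : d2 <= 6/5 * e by rewrite hd2; lra.
have A1 : (1 + 2 * d2) * (1 + 2 * d1) <= (1 + 12/5 * e) * (1 + 11/5 * e).
  by apply: ler_pM; lra.
have A2 : (1 + 2 * d2) * (1 + 2 * d1) * (1 + 10 * e) <=
          (1 + 12/5 * e) * (1 + 11/5 * e) * (1 + 10 * e).
  by apply: ler_wpM2r => //; lra.
have B1 : (1 - 24/5 * e) * (1 - 22/5 * e) <= (1 - 4 * d2) * (1 - 4 * d1).
  by apply: ler_pM; lra.
have C1 : (1 + 10 * e) * (1 - 24/5 * e) <= (1 + 10 * e) * (1 - 4 * d2).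
  by apply: ler_wpM2l; lra.
split; [lra|lra|lra|lra|].
split.
- lra.
- lra.
- lra.
- lra.
- split; lra.
Qed.


Lemma inner_le (x y b : 'I_A -> R) (c : R) : (forall a, x a <= c * y a) ->
  (forall a, 0 <= b a) -> inner x b <= c * inner y b.
Proof.
move=> H b0; rewrite /inner mulr_sumr; apply: ler_sum => a _.
rewrite mulrA; exact: ler_wpM2r.
Qed.

Definition Inv (e : R) (pk pk' : 'I_A -> R) :=
  [/\ posvec pk, in_simplex pk, posvec pk', in_simplex pk' &
      (forall a, pk' a <= (1 + 10 * e) * pk a) /\
      (forall a, pk a <= (1 + 10 * e) * pk' a)].

Lemma main_step (eta C e : R) (beta pk pk' pn pn' : 'I_A -> R) :
  (0 < A)%N -> 0 < eta -> eta * C = e -> 0 < e -> e <= 1 / 270 ->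
  Inv e pk pk' -> (forall a, 0 <= beta a) -> inner pk beta <= C ->
  is_omd_argmax eta beta pk' pn' -> is_omd_argmax eta beta pn' pn ->
  Inv e pn pn' /\ forall a, (1 - 20 * e) * pk a <= pn a /\ pn a <= (1 + 20 * e) * pk a.
Proof.
move=> A0 eta0 he e0 e1 [pkp pks pk'p pk's [I1 I2]] b0 hC Hp1 Hp2.
set d1 := e * (1 + 10 * e).
set d2 := (1 + 2 * d1) * d1.
have [n1 n2 n3 n4 [n5 n6 n7 n8 [n9 n10 n11 n12]]] :=
  numfacts e0 e1 (erefl d1) (erefl d2).
set M1 := (1 + 10 * e) * C.
have hM1 : inner pk' beta <= M1.
  apply: le_trans (inner_le I1 b0) _; rewrite /M1 ler_wpM2l //; lra.
have hd1 : eta * M1 = d1 by rewrite /M1 /d1 -he; ring.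
have S1 := step A0 eta0 pk'p pk's b0 hM1 ltac:(rewrite hd1; lra) Hp1.
rewrite hd1 in S1.
case: (Hp1) => pn's [pn'p _].
case: (Hp2) => pns [pnp _].
set M2 := (1 + 2 * d1) * M1.
have hM2 : inner pn' beta <= M2.
  apply: le_trans (inner_le (fun a => proj2 (S1 a)) b0) _.
  by rewrite /M2 ler_wpM2l.
have hd2 : eta * M2 = d2 by rewrite /M2 /d2 -hd1; ring.
have S2 := step A0 eta0 pn'p pn's b0 hM2 ltac:(rewrite hd2; lra) Hp2.
rewrite hd2 in S2.
split.
  split => //; split => a.
  - have [h1 _] := S2 a.
    have p0 : 0 <= pn' a by apply: ltW.
    have h2 : 1 * pn' a <= ((1 + 10 * e) * (1 - 4 * d2)) * pn' a by apply: ler_wpM2r.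
    have h3 : (1 + 10 * e) * ((1 - 4 * d2) * pn' a) <= (1 + 10 * e) * pn a.
      by apply: ler_wpM2l => //; lra.
    lra.
  - have [_ h1] := S2 a.
    have p0 : 0 <= pn' a by apply: ltW.
    have h2 : (1 + 2 * d2) * pn' a <= (1 + 10 * e) * pn' a by apply: ler_wpM2r.
    lra.
move=> a; split.
- have [h1 _] := S2 a; have [h2 _] := S1 a.
  have p0 : 0 <= pk a by apply: ltW.
  have p0' : 0 <= pk' a by apply: ltW.
  have g1 : (1 - 20 * e) * pk a <= (1 - 20 * e) * ((1 + 10 * e) * pk' a).
    by apply: ler_wpM2l.
  have g2 : ((1 - 20 * e) * (1 + 10 * e)) * pk' a <= ((1 - 4 * d2) * (1 - 4 * d1)) * pk' a.
    by apply: ler_wpM2r.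
  have g3 : (1 - 4 * d2) * ((1 - 4 * d1) * pk' a) <= (1 - 4 * d2) * pn' a.
    by apply: ler_wpM2l.
  lra.
- have [_ h1] := S2 a; have [_ h2] := S1 a.
  have p0 : 0 <= pk a by apply: ltW.
  have g1 : (1 + 2 * d2) * pn' a <= (1 + 2 * d2) * ((1 + 2 * d1) * pk' a).
    by apply: ler_wpM2l => //; lra.
  have g2 : (1 + 2 * d1) * pk' a <= (1 + 2 * d1) * ((1 + 10 * e) * pk a).
    by apply: ler_wpM2l.
  have g3 : (1 + 2 * d2) * ((1 + 2 * d1) * pk' a) <= (1 + 2 * d2) * ((1 + 2 * d1) * ((1 + 10 * e) * pk a)).
    by apply: ler_wpM2l => //; lra.
  have g4 : ((1 + 2 * d2) * (1 + 2 * d1) * (1 + 10 * e)) * pk a <= (1 + 20 * e) * pk a.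
    by apply: ler_wpM2r.
  lra.
Qed.

End H.

Theorem mainTheorem6 (R : realType) (A K N : nat) (eta : R)
  (pi pi' beta : nat -> 'I_A -> R) :
  (1 <= A)%N -> (1 <= K)%N -> (1 <= N)%N ->
  0 < eta -> eta <= (270 * (N.+1)%:R)^-1 ->
  (forall a, pi 1%N a = (A%:R)^-1) ->
  (forall a, pi' 1%N a = (A%:R)^-1) ->
  (forall k, (1 <= k <= K)%N ->
     (forall a, 0 <= beta k a) /\
     inner (pi k) (beta k) <= (N.+1)%:R /\
     is_omd_argmax eta (beta k) (pi' k) (pi' k.+1) /\
     is_omd_argmax eta (beta k) (pi' k.+1) (pi k.+1)) ->
  forall k, (1 <= k <= K)%N -> forall a : 'I_A,
    `| pi k.+1 a - pi k a | <= 120 * eta * (N.+1)%:R * pi k a.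
Proof.
move=> A1 K1 N1 eta0 etaC pi1 pi'1 Hk.
set C : R := (N.+1)%:R.
have C0 : 0 < C by rewrite /C ltr0n.
set e := eta * C.
have he : eta * C = e by [].
have e0 : 0 < e by rewrite /e mulr_gt0.
have e1 : e <= 1 / 270.
  have : eta * C <= (270 * C)^-1 * C by apply: ler_wpM2r => //; exact: ltW.
  have -> : (270 * C)^-1 * C = 1 / 270.
    by field; rewrite gt_eqF //; have := ler0n R N; lra.
  by [].
have base : Inv e (pi 1%N) (pi' 1%N).
  have A0 : 0 < (A%:R : R)^-1 by rewrite invr_gt0 ltr0n.
  have ss : \sum_(a < A) (A%:R : R)^-1 = 1.
    by rewrite sumr_const card_ord -(mulr_natl (A%:R : R)^-1 A) mulfV // pnatr_eq0 -lt0n.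
  have le1 : (A%:R : R)^-1 <= (1 + 10 * e) * (A%:R)^-1.
    have : 1 * (A%:R : R)^-1 <= (1 + 10 * e) * (A%:R)^-1.
      by apply: ler_wpM2r; [exact: ltW | lra].
    by rewrite mul1r.
  split.
  - by move=> a; rewrite pi1.
  - split; first by move=> a; rewrite pi1 ltW.
    by under eq_bigr do rewrite pi1.
  - by move=> a; rewrite pi'1.
  - split; first by move=> a; rewrite pi'1 ltW.
    by under eq_bigr do rewrite pi'1.
  - by split => a; rewrite pi1 pi'1.
have Hinv : forall k, (1 <= k <= K)%N -> Inv e (pi k) (pi' k).
  elim => [|k IH]; first by [].
  case: k IH => [|k] IH; first by move=> _; exact: base.
  move=> /andP[_ kK].
  have kK' : (1 <= k.+1 <= K)%N by rewrite /= ltnW.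
  have [b0 [hC [Hp1 Hp2]]] := Hk _ kK'.
  exact: (main_step A1 eta0 he e0 e1 (IH kK') b0 hC Hp1 Hp2).1.
move=> k kK a.
have [b0 [hC [Hp1 Hp2]]] := Hk _ kK.
have [_ B] := main_step A1 eta0 he e0 e1 (Hinv k kK) b0 hC Hp1 Hp2.
have [l u] := B a.
have [pkp _ _ _ _] := Hinv k kK.
have p0 : 0 <= pi k a by apply: ltW.
have ep : 0 <= e * pi k a by rewrite mulr_ge0 // ltW.
have -> : 120 * eta * C * pi k a = 120 * (e * pi k a) by rewrite /e; ring.
rewrite ler_norml; apply/andP; split; lra.
Qed.
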